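(* Let $I\unlhd K[x_1,\dots,x_n]$ be a homogeneous ideal and let $w\in\mathbb R^n$. Let $G$ be an initially reduced standard basis of $\pi^{-1}I$ with respect to the weighted ordering $>_{(-1,w)}$. Then $$\{\overline{\operatorname{in}_{(-1,w)}(g)}|_{t=1}:g\in G\}$$ is a standard basis of $\operatorname{in}_{\nu,w}(I)$ with respect to the lexicographical ordering $x_1>\dots>x_n$, i.e. the restriction of $>$ to monomials in $x$.
   Context: Let $K$ be a complete field with a non-trivial discrete valuation $\nu$ (with $\nu(p)=1$) and a uniformizing parameter $p$. Let $\mathcal O_K$ be its ring of integers and $\mathfrak K$ its residue field. Let $R\subseteq\mathcal O_K$ be a dense noetherian subring with $p\in R$. The map $\pi:R[[t]][x]\to\mathcal O_K[x]\subseteq K[x]$ sends $t\mapsto p$, and $\pi^{-1}I$ is the preimage. For $f=\sum_\alpha c_\alpha x^\alpha\in K[x]$, $\operatorname{in}_{\nu,w}(f)=\sum\overline{c_\alpha p^{-\nu(c_\alpha)}}x^\alpha$, summed over the $\alpha$ with $c_\alpha\ne0$ and $w\cdot\alpha-\nu(c_\alpha)$ maximal. $\operatorname{in}_{\nu,w}(I)\unlhd\mathfrak K[x]$ is generated by these initial forms. For $f=\sum c_{\alpha,\beta}t^\beta x^\alpha\in R[[t]][x]$ and $u\in\mathbb R_{<0}\times\mathbb R^n$, $\operatorname{in}_u(f)\in R[t,x]$ is the sum of the terms with $u\cdot(\beta,\alpha)$ maximal. For $h\in R[t,x]$, $\overline h|_{t=1}\in\mathfrak K[x]$ is obtained by reducing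 the coefficients to $\mathfrak K$ and setting $t=1$. Let $>$ be the $t$-local lexicographical monomial ordering on monomials $t^\beta x^\alpha$ with $x_1>\dots>x_n>1>t$. For $u\in\mathbb R_{<0}\times\mathbb R^n$, the weighted ordering is defined by $t^\beta x^\alpha>_u t^\delta x^\gamma$ iff $u\cdot(\beta,\alpha)>u\cdot(\delta,\gamma)$, or the two weights are equal and $t^\beta x^\alpha>t^\delta x^\gamma$. The leading term $\operatorname{lt}_{>_u}(g)$ of $g\in R[[t]][x]$ is its term with $>_u$-maximal monomial. A finite subset $G$ of an ideal $J$ is a standard basis with respect to $>_u$ if its leading terms generate the ideal generated by the leading terms of all elements of $J$. Write $G=\{g_1,\dots,g_k\}$ with $g_i=\sum_\alpha g_{i,\alpha}x^\alpha$ and $g_{i,\alpha}\in R[[t]]$. Then $G$ is initially reduced if the set $\{\sum_\alpha\operatorname{lt}_>(g_{i,\alpha})x^\alpha: i=1,\dots,k\}\subseteq R[t,x]$ is reduced in the classical (Gröbner basis) sense. *)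

(* Defs.v *)
From HB Require Import structures.
From mathcomp Require Import all_boot all_order all_algebra.
From mathcomp Require Import reals.
From Stdlib Require List.
Set Implicit Arguments. Unset Strict Implicit. Unset Printing Implicit Defensive.
Import Order.TTheory GRing.Theory Num.Theory.
Local Open Scope ring_scope.

(* Monomials t^beta x^alpha are encoded as pairs (alpha, beta).        *)
Definition mono (n : nat) := {ffun 'I_n -> nat}.

Section Monomials.
Variable n : nat.
Definition mdiv (a b : mono n) : bool := [forall i, (a i <= b i)%N].
Definition msub (b a : mono n) : mono n := [ffun i => (b i - a i)%N].
Definition mdeg (a : mono n) : nat := (\sum_(i < n) a i)%N.
(* lexicographic ordering x_1 > ... > x_n (index 0 is x_1): a >lex b *)
Definition lex_gt (a b : mono n) : Prop :=
  exists i : 'I_n, (b i < a i)%N /\ forall j : 'I_n, (j < i)%N -> a j = b j.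
(* the t-local lexicographical ordering  x_1 > ... > x_n > 1 > t  on t^beta x^alpha *)
Definition loc_gt (m m' : mono n * nat) : Prop :=
  lex_gt m.1 m'.1 \/ (m.1 = m'.1 /\ (m.2 < m'.2)%N).
Definition tmdiv (m m' : mono n * nat) : bool := mdiv m.1 m'.1 && (m.2 <= m'.2)%N.
Definition tmsub (m' m : mono n * nat) : mono n * nat := (msub m'.1 m.1, (m'.2 - m.2)%N).
End Monomials.

(* dv m m' : monomial m divides m';  sb m' m : the quotient m'/m.      *)
Section Generic.
Variables (T : eqType) (A : nzRingType).

Definition fsupp (f : T -> A) : Prop :=
  exists s : seq T, forall m, m \notin s -> f m = 0.

Definition is_lead (gt : T -> T -> Prop) (f l : T -> A) : Prop :=
  ((forall m, f m = 0) /\ (forall m, l m = 0)) \/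
  exists m, f m != 0 /\ (forall m', f m' != 0 -> m' = m \/ gt m m') /\
     (forall m', l m' = if m' == m then f m else 0).

Definition tmul (dv : T -> T -> bool) (sb : T -> T -> T) (c : A) (m : T) (f : T -> A)
  : T -> A := fun m' => if dv m m' then c * f (sb m' m) else 0.

Definition ideal_gen dv sb (C : A -> Prop) (S : (T -> A) -> Prop) (h : T -> A) : Prop :=
  exists l : seq (A * T * (T -> A)),
    (forall x, List.In x l -> C x.1.1 /\ S x.2) /\
    forall m, h m = \sum_(x <- l) tmul dv sb x.1.1 x.1.2 x.2 m.

Definition std_basis dv sb (C : A -> Prop) (gt : T -> T -> Prop)
  (J : (T -> A) -> Prop) (G : seq (T -> A)) : Prop :=
  (forall g, List.In g G -> J g) /\
  forall h, ideal_gen dv sb C (fun l => exists g, List.In g G /\ is_lead gt g l) h <->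
            ideal_gen dv sb C (fun l => exists f, J f /\ is_lead gt f l) h.
End Generic.

(* nu : K -> int; its value at 0 (conventionally +oo) is never used.   *)
Section Valued.
Variables (K : fieldType) (nu : K -> int) (p : K).

Definition OK (x : K) : Prop := x = 0 \/ 0 <= nu x.
Definition vclose (N : int) (x y : K) : Prop := x = y \/ N <= nu (x - y).
Definition vconv (s : nat -> K) (y : K) : Prop :=
  forall N : int, exists M, forall m, (M <= m)%N -> vclose N (s m) y.
Definition vcauchy (s : nat -> K) : Prop :=
  forall N : int, exists M, forall m m', (M <= m)%N -> (M <= m')%N -> vclose N (s m) (s m').

Definition complete_dvf : Prop :=
  [/\ forall x y, x != 0 -> y != 0 -> nu (x * y) = nu x + nu y,
      forall x y, x != 0 -> y != 0 -> x + y != 0 ->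
         (nu x <= nu (x + y)) || (nu y <= nu (x + y)),
      p != 0 /\ nu p = 1 &
      forall s, vcauchy s -> exists y, vconv s y].

Definition residue_map (kk : fieldType) (res : K -> kk) : Prop :=
  [/\ forall x y, OK x -> OK y -> res (x + y) = res x + res y,
      forall x y, OK x -> OK y -> res (x * y) = res x * res y,
      res 1 = 1,
      forall x, OK x -> (res x = 0 <-> (x = 0 \/ 0 < nu x)) &
      forall k, exists x, OK x /\ res x = k].

Definition R_ideal (R J : K -> Prop) : Prop :=
  [/\ forall x, J x -> R x, J 0, forall x y, J x -> J y -> J (x + y) &
      forall r x, R r -> J x -> J (r * x)].
Definition fin_gen (R J : K -> Prop) : Prop :=
  exists s : seq K, (forall x, List.In x s -> J x) /\
    forall x, J x -> exists cs : seq K, (forall c, List.In c cs -> R c) /\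
       size cs = size s /\ x = \sum_(i < size s) cs`_i * s`_i.

Definition good_subring (R : K -> Prop) : Prop :=
  [/\ R 0 /\ R 1 /\ (forall x y, R x -> R y -> R (x - y)) /\
        (forall x y, R x -> R y -> R (x * y)),
      (forall x, R x -> OK x) /\ R p,
      forall x N, OK x -> exists r, R r /\ vclose N x r &
      forall J, R_ideal R J -> fin_gen R J].

(* elements of R[[t]][x] : functions (alpha, beta) |-> coefficient of t^beta x^alpha *)
Definition in_RtX (R : K -> Prop) n (f : mono n * nat -> K) : Prop :=
  (forall m, R (f m)) /\
  exists s : seq (mono n), forall a b, a \notin s -> f (a, b) = 0.

(* pi : R[[t]][x] -> O_K[x], t |-> p *)
Definition pi_rel n (f : mono n * nat -> K) (F : mono n -> K) : Prop :=
  forall a, vconv (fun N => \sum_(b < N) f (a, nat_of_ord b) * p ^+ b) (F a).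

Definition pi_pre (R : K -> Prop) n (I : (mono n -> K) -> Prop) (f : mono n * nat -> K) : Prop :=
  in_RtX R f /\ exists F, pi_rel f F /\ I F.

Definition poly_ideal n (I : (mono n -> K) -> Prop) : Prop :=
  [/\ forall f, I f -> fsupp f, I (fun _ => 0),
      forall f g, I f -> I g -> I (fun a => f a + g a) &
      forall c a f, I f -> I (tmul (@mdiv n) (@msub n) c a f)].
Definition homog_ideal n (I : (mono n -> K) -> Prop) : Prop :=
  poly_ideal I /\
  forall f d, I f -> I (fun a => if mdeg a == d then f a else 0).

Variable Rt : realType.
Definition wdot n (w : 'I_n -> Rt) (a : mono n) : Rt := \sum_i w i * (a i)%:R.

Definition init_nu n (kk : fieldType) (res : K -> kk) (w : 'I_n -> Rt)
  (f : mono n -> K) (F : mono n -> kk) : Prop :=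
  exists M : Rt,
   (forall a, f a != 0 -> wdot w a - (nu (f a))%:~R <= M) /\
   ((forall a, f a = 0) \/ exists a, f a != 0 /\ wdot w a - (nu (f a))%:~R = M) /\
   forall a, F a = if (f a != 0) && (wdot w a - (nu (f a))%:~R == M)
                   then res (f a * p ^ (- nu (f a))) else 0.

Definition init_nu_ideal n (kk : fieldType) (res : K -> kk) (w : 'I_n -> Rt)
  (I : (mono n -> K) -> Prop) : (mono n -> kk) -> Prop :=
  ideal_gen (@mdiv n) (@msub n) (fun _ => True)
            (fun F0 => exists f, I f /\ init_nu res w f F0).

Definition wt_u n (w : 'I_n -> Rt) (m : mono n * nat) : Rt := wdot w m.1 - (m.2)%:R.

Definition init_u n (w : 'I_n -> Rt) (f h : mono n * nat -> K) : Prop :=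
  exists M : Rt,
   (forall m, f m != 0 -> wt_u w m <= M) /\
   ((forall m, f m = 0) \/ exists m, f m != 0 /\ wt_u w m = M) /\
   forall m, h m = if wt_u w m == M then f m else 0.

Definition gt_u n (w : 'I_n -> Rt) (m m' : mono n * nat) : Prop :=
  wt_u w m' < wt_u w m \/ (wt_u w m = wt_u w m' /\ loc_gt m m').

Definition t_one n (kk : fieldType) (res : K -> kk) (h : mono n * nat -> K)
  (F : mono n -> kk) : Prop :=
  exists N, (forall a b, (N <= b)%N -> h (a, b) = 0) /\
            forall a, F a = \sum_(b < N) res (h (a, nat_of_ord b)).
End Valued.

(* h = sum_alpha lt_>(g_alpha) x^alpha *)
Definition tlead_part (K : fieldType) n (g h : mono n * nat -> K) : Prop :=
  forall a,
  ((forall b, g (a, b) = 0) /\ forall b, h (a, b) = 0) \/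
  exists b, g (a, b) != 0 /\ (forall b', (b' < b)%N -> g (a, b') = 0) /\
            forall b', h (a, b') = if b' == b then g (a, b) else 0.

Definition reduced_set (K : fieldType) (R : K -> Prop) n (H : seq (mono n * nat -> K)) : Prop :=
  forall h h', List.In h H -> List.In h' H -> ~ (forall m, h m = h' m) ->
    forall l, is_lead (@loc_gt n) h l ->
    forall m m', l m != 0 -> h' m' != 0 ->
      ~ (tmdiv m m' /\ exists r, R r /\ h' m' = r * l m).

Definition init_reduced (K : fieldType) (R : K -> Prop) n (G : seq (mono n * nat -> K)) : Prop :=
  forall H, List.Forall2 (@tlead_part K n) G H -> reduced_set R H.

(* Main.v *)
Require Import Defs.
From HB Require Import structures.
From mathcomp Require Import all_boot all_order all_algebra.
From mathcomp Require Import reals.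
From mathcomp Require Import zify ring lra.
From Stdlib Require List.
From Stdlib Require Import ClassicalEpsilon FunctionalExtensionality.
Set Implicit Arguments. Unset Strict Implicit. Unset Printing Implicit Defensive.
Import Order.TTheory GRing.Theory Num.Theory.
Local Open Scope ring_scope.
Section Val.
Variables (K : fieldType) (nu : K -> int) (p : K).
Hypothesis hK : complete_dvf nu p.
Variable Rt : realType.

Definition vge (r : Rt) (x : K) : Prop := x = 0 \/ r <= (nu x)%:~R.

Lemma nuM (x y : K) : x != 0 -> y != 0 -> nu (x * y) = nu x + nu y.
Proof. by move: hK; rewrite /complete_dvf => -[h _ _ _]; apply: h. Qed.
Lemma p_neq0 : p != 0. Proof. by move: hK; rewrite /complete_dvf => -[_ _ []]. Qed.
Lemma nup : nu p = 1. Proof. by move: hK; rewrite /complete_dvf => -[_ _ []]. Qed.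
Lemma nu1 : nu 1 = 0.
Proof.
have h : nu 1 = nu 1 + nu 1 by rewrite -{1}(mulr1 1) nuM ?oner_neq0.
lia.
Qed.
Lemma nuV (x : K) : x != 0 -> nu x^-1 = - nu x.
Proof.
move=> x0; have h : 0 = nu x + nu x^-1 by rewrite -nu1 -(mulfV x0) nuM // invr_neq0.
lia.
Qed.
Lemma nuN1 : nu (-1) = 0.
Proof.
have n1 : (-1 : K) != 0 by rewrite oppr_eq0 oner_neq0.
have h : 0 = nu (-1) + nu (-1) by rewrite -nuM // mulrNN mulr1 nu1.
lia.
Qed.
Lemma nuN (x : K) : nu (- x) = nu x.
Proof.
have [->|x0] := eqVneq x 0; first by rewrite oppr0.
have n1 : (-1 : K) != 0 by rewrite oppr_eq0 oner_neq0.
by rewrite -mulN1r nuM // nuN1 add0r.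
Qed.
Lemma nu_expn k : nu (p ^+ k) = k.
Proof.
elim: k => [|k IH]; first by rewrite expr0 nu1.
rewrite exprS nuM ?expf_neq0 ?p_neq0 // IH nup.
by rewrite -addn1 PoszD addrC.
Qed.
Lemma nu_expz (z : int) : nu (p ^ z) = z.
Proof.
case: z => k; first by rewrite nu_expn.
by rewrite NegzE -exprnN nuV ?expf_neq0 ?p_neq0 // nu_expn.
Qed.
Lemma expz_neq0 (z : int) : p ^ z != 0.
Proof. by rewrite expfz_neq0 // p_neq0. Qed.
Lemma expzD (a b : int) : p ^ (a + b) = p ^ a * p ^ b.
Proof. by rewrite expfzDr // p_neq0. Qed.

Lemma ultra (x y : K) : x != 0 -> y != 0 -> x + y != 0 ->
  (nu x <= nu (x + y)) || (nu y <= nu (x + y)).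
Proof. by move: hK; rewrite /complete_dvf => -[_ H _ _]; apply: H. Qed.

Lemma vge0 r : vge r 0. Proof. by left. Qed.
Lemma vgeD r x y : vge r x -> vge r y -> vge r (x + y).
Proof.
move=> [->|hx]; first by rewrite add0r.
move=> [->|hy]; first by rewrite addr0; right.
have [e|e] := eqVneq (x + y) 0; first by left.
right.
have [->|x0] := eqVneq x 0; first by rewrite add0r; apply: hy.
have [->|y0] := eqVneq y 0; first by rewrite addr0; apply: hx.
case/orP: (ultra x0 y0 e) => h.
  by apply: (le_trans hx); rewrite ler_int.
by apply: (le_trans hy); rewrite ler_int.
Qed.
Lemma vgeN r x : vge r x -> vge r (- x).
Proof. by case=> [->|h]; [left; rewrite oppr0|right; rewrite nuN]. Qed.
Lemma vgeB r x y : vge r x -> vge r y -> vge r (x - y).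
Proof. by move=> hx hy; apply: vgeD => //; apply: vgeN. Qed.
Lemma vge_sum r (I : Type) (s : seq I) (P : pred I) (F : I -> K) :
  (forall i, P i -> vge r (F i)) -> vge r (\sum_(i <- s | P i) F i).
Proof.
move=> h; apply: (big_ind (vge r)); [exact: vge0|exact: vgeD|exact: h].
Qed.
Lemma vgeM a b x y : vge a x -> vge b y -> vge (a + b) (x * y).
Proof.
move=> [->|hx]; first by left; rewrite mul0r.
move=> [->|hy]; first by left; rewrite mulr0.
have [->|x0] := eqVneq x 0; first by left; rewrite mul0r.
have [->|y0] := eqVneq y 0; first by left; rewrite mulr0.
by right; rewrite nuM // intrD; apply: lerD.
Qed.
Lemma vge_le r r' x : r' <= r -> vge r x -> vge r' x.
Proof. by move=> h [->|hx]; [left|right; apply: le_trans hx]. Qed.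
Lemma vge_expz (z : int) : vge z%:~R (p ^ z).
Proof. by right; rewrite nu_expz. Qed.
Lemma vge_nu x : vge (nu x)%:~R x.
Proof. by right. Qed.
Lemma OK_vge x : OK nu x <-> vge 0 x.
Proof.
split; case=> h; [by left| by right; rewrite ler0z | by left| by right; rewrite -(ler0z Rt)].
Qed.
Lemma vge_exact (x y : K) : x != 0 -> vge ((nu x)%:~R + 1) (y - x) -> y != 0 /\ nu y = nu x.
Proof.
move=> x0 h.
have hy : y = x + (y - x) by rewrite addrC subrK.
case: h => [e|h].
  by move/eqP: e; rewrite subr_eq0 => /eqP ->.
have [e|yx0] := eqVneq (y - x) 0.
  by move/eqP: e; rewrite subr_eq0 => /eqP ->.
have y0 : y != 0.
  apply/eqP => y0; move: h; rewrite y0 sub0r nuN; lra.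
split => //.
have hl : (nu x < nu (y - x))%R.
  by rewrite -(ltr_int Rt); lra.
have xyx0 : x - y != 0 by rewrite -opprB oppr_eq0.
have u1 := ultra x0 yx0; rewrite -hy in u1; have {u1} u1 := u1 y0.
have e2 : y + (x - y) = x by rewrite addrC subrK.
have u2 := ultra y0 xyx0; rewrite e2 in u2; have {u2} u2 := u2 x0.
rewrite -opprB nuN in u2.
case/orP: u1 => h1; case/orP: u2 => h2.
- by apply/eqP; rewrite eq_le h1 h2.
- by move: (lt_le_trans hl h2); rewrite ltxx.
- by move: (lt_le_trans hl (le_trans h1 h2)); rewrite ltxx.
- by move: (lt_le_trans hl h2); rewrite ltxx.
Qed.
Variables (kk : fieldType) (res : K -> kk).
Hypothesis hres : residue_map nu res.

Lemma resD (x y : K) : vge 0 x -> vge 0 y -> res (x + y) = res x + res y.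
Proof. move=> /OK_vge hx /OK_vge hy; move: hres => -[h _ _ _ _]; exact: h. Qed.
Lemma resM (x y : K) : vge 0 x -> vge 0 y -> res (x * y) = res x * res y.
Proof. move=> /OK_vge hx /OK_vge hy; move: hres => -[_ h _ _ _]; exact: h. Qed.
Lemma res1 : res 1 = 1.
Proof. by move: hres => -[_ _ h _ _]. Qed.
Lemma res0 : res 0 = 0.
Proof.
have h := resD (vge0 0) (vge0 0); rewrite addr0 in h.
by apply: (addrI (res 0)); rewrite addr0 -h.
Qed.
Lemma res_eq0 (x : K) : vge 0 x -> (res x = 0 <-> vge 1 x).
Proof.
move=> hx; have hx' := hx; move/OK_vge: hx' => hx'.
move: hres => -[_ _ _ h _]; rewrite (h x hx').
split.
- case=> [->|h1]; first by left.
  by right; rewrite (ler_int Rt 1); lia.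
- case=> [->|h1]; first by left.
  by right; move: h1; rewrite (ler_int Rt 1); lia.
Qed.
Lemma res_surj (c : kk) : exists x, vge 0 x /\ res x = c.
Proof.
move: hres => -[_ _ _ _ h]; have [x [hx e]] := h c.
by exists x; split => //; apply/OK_vge.
Qed.
Lemma vge_int_lt (x : K) (z : int) : x != 0 -> vge (z%:~R + 1) x -> (z < nu x)%R.
Proof.
move=> x0 [e|h]; first by move: x0; rewrite e eqxx.
have : ((z + 1)%:~R : Rt) <= (nu x)%:~R by rewrite intrD.
rewrite ler_int; lia.
Qed.
Lemma res_neq0 (x : K) : vge 0 x -> res x != 0 -> x != 0 /\ nu x = 0.
Proof.
move=> hx hr.
have x0 : x != 0 by apply/eqP => e; move: hr; rewrite e res0 eqxx.
split => //.
case: (hx) => [e|h]; first by move: x0; rewrite e eqxx.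
have : ~ vge 1 x by move/(res_eq0 hx) => e; move: hr; rewrite e eqxx.
move=> nv.
have h0 : (0 <= nu x)%R by rewrite -(ler_int Rt).
have : ~ (1 <= nu x)%R by move=> h1; apply: nv; right; rewrite (ler_int Rt 1).
lia.
Qed.
Lemma res_sum (I : Type) (s : seq I) (P : pred I) (F : I -> K) :
  (forall i, P i -> vge 0 (F i)) ->
  res (\sum_(i <- s | P i) F i) = \sum_(i <- s | P i) res (F i).
Proof.
move=> h; elim: s => [|a s IH]; first by rewrite !big_nil res0.
rewrite !big_cons; case: ifP => Pa //.
by rewrite resD ?IH //; [exact: h | exact: vge_sum].
Qed.
Variable R : K -> Prop.
Hypothesis hR : good_subring nu p R.

Lemma R_OK (x : K) : R x -> vge 0 x.
Proof. by move: hR => -[_ [h _] _ _] /h /OK_vge. Qed.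
Lemma R0 : R 0. Proof. by move: hR => -[[h _] _ _ _]. Qed.
Lemma R1 : R 1. Proof. by move: hR => -[[_ [h _]] _ _ _]. Qed.
Lemma RM (x y : K) : R x -> R y -> R (x * y).
Proof. by move: hR => -[[_ [_ [_ h]]] _ _ _]; apply: h. Qed.

Lemma vge_pinv : vge (-1) p^-1.
Proof. by right; rewrite nuV ?p_neq0 // nup. Qed.

Lemma ex_approx (x : K) : exists r, R r /\ (vge 0 x -> vge 1 (x - r)).
Proof.
case: (classic (vge 0 x)) => hx; last by exists 0; split => //; exact: R0.
move: hR => -[_ _ hd _].
have [r [Rr hr]] := hd x 1 (proj2 (OK_vge x) hx).
exists r; split => // _.
case: hr => [->|h]; first by left; rewrite subrr.
by right; rewrite (ler_int Rt 1).
Qed.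

Definition approx0 (x : K) : K := proj1_sig (constructive_indefinite_description _ (ex_approx x)).
Definition approx (x : K) : K := if (x == 0) || (0 < nu x)%R then 0 else approx0 x.

Lemma approxR x : R (approx x).
Proof.
rewrite /approx; case: ifP => _; first exact: R0.
exact: (proj1 (proj2_sig (constructive_indefinite_description _ (ex_approx x)))).
Qed.
Lemma approx_close x : vge 0 x -> vge 1 (x - approx x).
Proof.
move=> hx; rewrite /approx; case: ifPn => h.
  rewrite subr0; case/orP: h => [/eqP e|h]; first by left.
  by right; rewrite (ler_int Rt 1); lia.
exact: (proj2 (proj2_sig (constructive_indefinite_description _ (ex_approx x))) hx).
Qed.
Lemma approx_small x : (0 < nu x)%R -> approx x = 0.
Proof. by move=> h; rewrite /approx h orbT. Qed.
Lemma approx0E : approx 0 = 0.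
Proof. by rewrite /approx eqxx. Qed.

Fixpoint rem (c : K) (b : nat) : K :=
  match b with 0 => c | b'.+1 => (rem c b' - approx (rem c b')) * p^-1 end.
Definition digit (c : K) (b : nat) : K := approx (rem c b).

Lemma rem_OK c b : vge 0 c -> vge 0 (rem c b).
Proof.
move=> hc; elim: b => [|b IH] //=.
have := vgeM (approx_close IH) vge_pinv; rewrite subrr.
by [].
Qed.

Lemma digit_sum c N : \sum_(b < N) digit c b * p ^+ b = c - rem c N * p ^+ N.
Proof.
elim: N => [|N IH]; first by rewrite big_ord0 expr0 mulr1 subrr.
rewrite big_ord_recr /= IH /digit exprSr.
have p0 := p_neq0.
rewrite (mulrC (p ^+ N)) mulrA divfK //; ring.
Qed.

Lemma vge_conv (s : nat -> K) (y : K) :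
  (forall N : int, exists M, forall m, (M <= m)%N -> vge N%:~R (s m - y)) ->
  vconv nu s y.
Proof.
move=> h N; have [M hM] := h N; exists M => m /hM [e|e].
  by left; apply/eqP; rewrite -subr_eq0 e.
by right; rewrite -(ler_int Rt).
Qed.

Lemma digit_conv c : vge 0 c -> vconv nu (fun N => \sum_(b < N) digit c b * p ^+ b) c.
Proof.
move=> hc; apply: vge_conv => N; exists `|N|%N => m hm.
rewrite digit_sum addrAC subrr add0r.
apply: vgeN.
have := vgeM (rem_OK m hc) (vge_expz m); rewrite add0r -exprnP => h.
apply: vge_le h.
have : (N <= Posz m)%R by lia.
by rewrite -(ler_int Rt).
Qed.

Lemma digitR c b : R (digit c b).
Proof. exact: approxR. Qed.

Lemma rem0 b : rem 0 b = 0.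
Proof. by elim: b => //= b ->; rewrite approx0E subrr mul0r. Qed.

Lemma rem_low c (b : nat) : c != 0 -> (Posz b <= nu c)%R -> rem c b = c * p ^ (- Posz b).
Proof.
move=> c0; elim: b => [|b IH] hb /=; first by rewrite oppr0 expr0z mulr1.
have hb' : (Posz b <= nu c)%R by lia.
rewrite IH // approx_small.
  rewrite subr0 -mulrA -exprN1 -expzD; congr (_ * p ^ _); lia.
rewrite nuM ?expz_neq0 // nu_expz; lia.
Qed.

Lemma digit_low c (b : nat) : c != 0 -> (Posz b < nu c)%R -> digit c b = 0.
Proof.
move=> c0 hb; rewrite /digit rem_low //; last by lia.
apply: approx_small; rewrite nuM ?expz_neq0 // nu_expz; lia.
Qed.

Lemma lift (c : K) : vge 0 c -> exists r : nat -> K,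
  (forall b, R (r b)) /\ vconv nu (fun N => \sum_(b < N) r b * p ^+ b) c /\
  (forall b : nat, r b != 0 -> c != 0 /\ (nu c <= Posz b)%R) /\
  (c != 0 -> res (r `|nu c|%N) = res (c * p ^ (- nu c))).
Proof.
move=> hc; exists (digit c); split; first exact: digitR.
split; first exact: digit_conv.
split.
  move=> b hb.
  have [c0|c0] := eqVneq c 0; first by move: hb; rewrite c0 /digit rem0 approx0E eqxx.
  split => //; case: (leP (nu c) (Posz b)) => // h.
  by move: hb; rewrite digit_low ?eqxx.
move=> c0.
have hn : (0 <= nu c)%R by case: hc => [e|h]; [move: c0; rewrite e eqxx| rewrite -(ler_int Rt)].
have e1 : Posz `|nu c|%N = nu c by lia.
have hr : rem c `|nu c|%N = c * p ^ (- Posz `|nu c|%N) by apply: rem_low => //; rewrite e1.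
rewrite e1 in hr.
have hrem : vge 0 (rem c `|nu c|%N) by exact: rem_OK.
have hcl := approx_close hrem.
rewrite -hr.
rewrite -[rem c _](subrK (digit c `|nu c|%N)) resD //; last first.
  exact: R_OK (digitR _ _).
  exact: vgeB hrem (R_OK (digitR _ _)).
have -> : res (rem c `|nu c|%N - digit c `|nu c|%N) = 0.
  apply/(res_eq0 (vgeB hrem (R_OK (digitR _ _)))); exact: hcl.
by rewrite add0r.
Qed.
Lemma vconv_vge (r : Rt) (s : nat -> K) (y : K) : vconv nu s y ->
  (exists M0, forall m, (M0 <= m)%N -> vge r (s m)) -> vge r y.
Proof.
move=> hc [M0 hM0].
have [->|y0] := eqVneq y 0; first exact: vge0.
have [M hM] := hc (nu y + 1).
have hm := hM (maxn M M0) (leq_maxl _ _).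
have hs := hM0 (maxn M M0) (leq_maxr _ _).
case: hm => [e|h]; first by rewrite -e.
have hh : vge ((nu y)%:~R + 1) (s (maxn M M0) - y) by right; move: h; rewrite -(ler_int Rt) intrD.
have [s0 e] := vge_exact y0 hh.
case: hs => [e'|h']; first by move: s0; rewrite e' eqxx.
by right; rewrite -e.
Qed.

Lemma vconv_shift (s : nat -> K) (y z : K) : vconv nu s y -> vconv nu (fun m => s m - z) (y - z).
Proof.
move=> hc N; have [M hM] := hc N; exists M => m /hM [e|h].
  by left; rewrite e.
by right; rewrite opprB addrA subrK.
Qed.

Lemma sum_single (A : nmodType) (f : nat -> A) (N b0 : nat) :
  (forall b : nat, b != b0 -> f b = 0) -> ((N <= b0)%N -> f b0 = 0) ->
  \sum_(b < N) f b = f b0.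
Proof.
move=> h1 h2; case: (ltnP b0 N) => hb.
  rewrite (bigD1 (Ordinal hb)) //= big1 ?addr0 // => i /eqP hi.
  apply: h1; apply/eqP => e; apply: hi; apply: val_inj => /=; exact: e.
rewrite big1 ?h2 // => i _; apply: h1; apply/eqP => e.
by move: (ltn_ord i); rewrite e ltnNge hb.
Qed.

Variables (n : nat) (w : 'I_n -> Rt).

Lemma natr_posz (b : nat) : ((Posz b)%:~R : Rt) = b%:R.
Proof. by []. Qed.

Lemma term_vge (g : mono n * nat -> K) (a : mono n) (r : Rt) (b : nat) :
  vge 0 (g (a, b)) -> (g (a, b) != 0 -> r <= b%:R) -> vge r (g (a, b) * p ^+ b).
Proof.
move=> h0 hb.
have [e|g0] := eqVneq (g (a, b)) 0; first by rewrite e mul0r; exact: vge0.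
have := vgeM h0 (vge_expz b); rewrite add0r -exprnP natr_posz.
by apply: vge_le; apply: hb.
Qed.

Lemma partA (g : mono n * nat -> K) (F : mono n -> K) (h : mono n * nat -> K) (T : mono n -> kk) :
  (forall m, R (g m)) -> pi_rel nu p g F -> init_u w g h -> t_one res h T ->
  (forall a, T a = 0) \/ init_nu nu p res w F T.
Proof.
move=> gR hpi [M [hM1 [hM2 hM3]]] [N [hN1 hN2]].
have gOK : forall m, vge 0 (g m) by move=> m; apply: R_OK.
have K0 : forall a, vge 0 (F a) /\ vge (wdot w a - M) (F a).
  move=> a; split; apply: (vconv_vge (hpi a)); exists 0%N => m _;
    apply: vge_sum => b _; apply: term_vge => //.
  by move=> /hM1; rewrite /wt_u /= => ?; lra.
have KT : forall a (b0 : nat), wdot w a - b0%:R = M -> T a = res (g (a, b0)).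
  move=> a b0 hb0; rewrite hN2.
  rewrite (@sum_single _ (fun b => res (h (a, b))) N b0).
  - by rewrite hM3 /wt_u /= hb0 eqxx.
  - move=> b hb; rewrite hM3 /wt_u /=; case: eqP => [e|_]; last by rewrite res0.
    exfalso; move/eqP: hb; apply; apply/eqP; rewrite -(eqr_nat Rt); apply/eqP; lra.
  - by move=> hle; rewrite hN1 // res0.
have KT0 : forall a, (forall b0 : nat, wdot w a - b0%:R != M) -> T a = 0.
  move=> a hn; rewrite hN2 big1 // => b _; rewrite hM3 /wt_u /=.
  by rewrite (negbTE (hn b)) res0.
have KX : forall a (b0 : nat), wdot w a - b0%:R = M ->
    vge (b0%:R + 1) (F a - g (a, b0) * p ^+ b0).
  move=> a b0 hb0.
  apply: (vconv_vge (vconv_shift _ (hpi a))); exists b0.+1 => m hm.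
  rewrite (bigD1 (Ordinal hm)) //= addrAC subrr add0r.
  apply: vge_sum => b hb; apply: term_vge => // /hM1; rewrite /wt_u /= => hw.
  have hbb : (nat_of_ord b != b0).
    by apply/eqP => e; move/eqP: hb; apply; apply: val_inj.
  have : (b0%:R : Rt) <= (nat_of_ord b)%:R by lra.
  rewrite ler_nat => hle.
  have : (b0 < b)%N by rewrite ltn_neqAle eq_sym hbb hle.
  move=> hlt; have hl2 : ((b0.+1)%:R : Rt) <= (nat_of_ord b)%:R by rewrite ler_nat.
  by rewrite -natr1 in hl2.
have K2 : forall a, T a = if (F a != 0) && (wdot w a - (nu (F a))%:~R == M)
                         then res (F a * p ^ (- nu (F a))) else 0.
  move=> a; have [hF0 hFM] := K0 a.
  case: (classic (exists b0 : nat, wdot w a - b0%:R = M)) => [[b0 hb0]|hn]; last first.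
    rewrite KT0; last by move=> b0; apply/eqP => e; apply: hn; exists b0.
    case: (F a =P 0) => //= /eqP F0; case: eqP => // e; exfalso; apply: hn.
    case: hF0 => [e0|hF0]; first by move: F0; rewrite e0 eqxx.
    have hn0 : (0 <= nu (F a))%R by rewrite -(ler_int Rt).
    exists `|nu (F a)|%N; rewrite -natr_posz.
    have -> : Posz `|nu (F a)|%N = nu (F a) by lia.
    exact: e.
  rewrite (KT a b0 hb0).
  have hX := KX a b0 hb0.
  have [hr|hr] := eqVneq (res (g (a, b0))) 0.
    rewrite hr.
    have hg1 : vge 1 (g (a, b0)) by apply/(res_eq0 (gOK _)).
    have hx : vge (b0%:R + 1) (g (a, b0) * p ^+ b0).
      have := vgeM hg1 (vge_expz b0); rewrite -exprnP natr_posz addrC; exact.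
    have hF : vge (b0%:R + 1) (F a) by rewrite -(subrK (g (a, b0) * p ^+ b0) (F a)); apply: vgeD.
    case: (F a =P 0) => //= /eqP F0; case: eqP => // e; exfalso.
    case: hF => [e0|hF]; first by move: F0; rewrite e0 eqxx.
    lra.
  have [g0 ng0] := res_neq0 (gOK _) hr.
  have x0 : g (a, b0) * p ^+ b0 != 0 by rewrite mulf_neq0 // expf_neq0 // p_neq0.
  have nx : nu (g (a, b0) * p ^+ b0) = Posz b0 by rewrite nuM ?expf_neq0 ?p_neq0 // ng0 nu_expn add0r.
  have hh : vge ((nu (g (a, b0) * p ^+ b0))%:~R + 1) (F a - g (a, b0) * p ^+ b0) by rewrite nx.
  have [F0 nF] := vge_exact x0 hh.
  rewrite F0 nF nx natr_posz hb0 eqxx /=.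
  have -> : F a * p ^ (- Posz b0) = g (a, b0) + (F a - g (a, b0) * p ^+ b0) * p ^ (- Posz b0).
    rewrite mulrBl -mulrA exprnP -expzD subrr expr0z mulr1; ring.
  have hy : vge 1 ((F a - g (a, b0) * p ^+ b0) * p ^ (- Posz b0)).
    have := vgeM hX (vge_expz (- Posz b0)); rewrite intrN natr_posz.
    by apply: vge_le; lra.
  rewrite resD //; last exact: vge_le hy.
  by have -> := proj2 (res_eq0 (vge_le ler01 hy)) hy; rewrite addr0.
case: (classic (forall a, T a = 0)) => hT; first by left.
right; exists M; split.
  move=> a F0; have [_ hF] := K0 a.
  case: hF => [e|hF]; first by move: F0; rewrite e eqxx.
  lra.
split.
  right; have [a ha] := not_all_ex_not _ _ hT.
  exists a; move: ha; rewrite K2.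
  by case: (F a =P 0) => //= /eqP F0; case: eqP.
exact: K2.
Qed.
Lemma wt_inj (a : mono n) (b b' : nat) : wt_u w (a, b) = wt_u w (a, b') -> b = b'.
Proof.
rewrite /wt_u /= => e; apply/eqP; rewrite -(eqr_nat Rt); apply/eqP; lra.
Qed.

Lemma partB4 (g h : mono n * nat -> K) (T : mono n -> kk) (mu : mono n * nat) :
  g mu != 0 -> (forall m', g m' != 0 -> m' = mu \/ gt_u w mu m') ->
  init_u w g h -> t_one res h T ->
  T mu.1 = res (g mu) /\ (forall a, T a != 0 -> a = mu.1 \/ lex_gt mu.1 a).
Proof.
move=> g0 hlead [M [hM1 [hM2 hM3]]] [N [hN1 hN2]].
have hwM : wt_u w mu = M.
  apply/eqP; rewrite eq_le hM1 //=.
  case: hM2 => [e|[m0 [gm0 e]]]; first by move: g0; rewrite e eqxx.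
  rewrite -e; case: (hlead m0 gm0) => [->//|[hlt|[heq _]]]; first exact: ltW.
  by rewrite heq.
have hmu : h mu = g mu by rewrite hM3 hwM eqxx.
split.
  rewrite hN2 (@sum_single _ (fun b => res (h (mu.1, b))) N mu.2).
  - by rewrite -surjective_pairing hmu.
  - move=> b hb; rewrite hM3; case: eqP => [e|_]; last by rewrite res0.
    exfalso; move/eqP: hb; apply; apply: (@wt_inj mu.1); rewrite e -hwM.
    by rewrite -surjective_pairing.
  - move=> hle; exfalso; move: g0; rewrite -hmu [mu]surjective_pairing hN1 ?eqxx //.
move=> a Ta.
have [b hb] : exists b, res (h (a, b)) != 0.
  apply: NNPP => hn; move/eqP: Ta; apply; rewrite hN2 big1 // => b _.
  by case: (eqVneq (res (h (a, nat_of_ord b))) 0) => // hne; exfalso; apply: hn; exists (nat_of_ord b).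
have hab : h (a, b) != 0 by apply: contraNneq hb => ->; rewrite res0.
move: hab; rewrite hM3; case: (wt_u w (a, b) =P M) => [e|_] gab; last by move: gab; rewrite eqxx.
case: (hlead _ gab) => [e2|[hlt|[heq hloc]]]; first by left; rewrite -e2.
  by move: hlt; rewrite e -hwM ltxx.
case: hloc => [hl|[e1 _]]; first by right.
by left; rewrite e1.
Qed.
Variable I : (mono n -> K) -> Prop.
Hypothesis hI : poly_ideal I.

Definition mono0 : mono n := [ffun => 0%N].
Lemma mdiv0 (a : mono n) : mdiv mono0 a.
Proof. by apply/forallP => i; rewrite ffunE. Qed.
Lemma msub0 (a : mono n) : msub a mono0 = a.
Proof. by apply/ffunP => i; rewrite !ffunE subn0. Qed.

Lemma I_tmul c a f : I f -> I (tmul (@mdiv n) (@msub n) c a f).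
Proof. by move: hI => -[_ _ _ h]; apply: h. Qed.
Lemma I_add f f' : I f -> I f' -> I (fun a => f a + f' a).
Proof. by move: hI => -[_ _ h _]; apply: h. Qed.
Lemma I_zero : I (fun _ => 0).
Proof. by move: hI => -[_ h _ _]. Qed.
Lemma I_fsupp f : I f -> fsupp f.
Proof. by move: hI => -[h _ _ _]; apply: h. Qed.
Lemma I_scale c f : I f -> I (fun a => c * f a).
Proof.
move=> hf; have := I_tmul c mono0 hf.
suff -> : tmul (@mdiv n) (@msub n) c mono0 f = (fun a => c * f a) by [].
by apply: functional_extensionality => a; rewrite /tmul mdiv0 msub0.
Qed.

Lemma res_unit (x : K) : x != 0 -> nu x = 0 -> res x != 0.
Proof.
move=> x0 nx; apply/eqP => /(res_eq0 (or_intror _)) h.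
have h0 : (0 : Rt) <= (nu x)%:~R by rewrite nx.
case: (h h0) => [e|h1]; first by move: x0; rewrite e eqxx.
by move: h1; rewrite nx; lra.
Qed.

Lemma bound_seq (H : mono n -> K) (s : seq (mono n)) :
  exists k : nat, forall a, a \in s -> (- nu (H a) <= Posz k)%R.
Proof.
elim: s => [|a0 s [k hk]]; first by exists 0%N.
exists (maxn k `|nu (H a0)|%N) => a; rewrite inE => /orP[/eqP ->|/hk h]; lia.
Qed.

Lemma partB2 (H : mono n -> K) (W : Rt) (astar : mono n) :
  I H -> (forall a, vge (wdot w a - W) (H a)) ->
  (forall a, H a != 0 -> (nu (H a))%:~R = wdot w a - W -> a = astar \/ lex_gt astar a) ->
  W = wdot w astar -> H astar != 0 -> nu (H astar) = 0 ->
  exists g l (ms : mono n * nat), pi_pre nu p R I g /\ is_lead (gt_u w) g l /\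
    ms.1 = astar /\ res (g ms) = res (H astar) /\ l ms = g ms.
Proof.
move=> HI hHa hQ hW Hs0 nHs.
have [s hs] := I_fsupp HI.
have [k hk] := bound_seq H s.
set c := fun a => p ^+ k * H a.
have nc : forall a, H a != 0 -> nu (c a) = Posz k + nu (H a).
  by move=> a Ha0; rewrite /c nuM ?expf_neq0 ?p_neq0 // nu_expn.
have c0 : forall a, (c a != 0) = (H a != 0).
  by move=> a; rewrite /c mulf_eq0 negb_or expf_neq0 ?p_neq0.
have hc : forall a, vge 0 (c a).
  move=> a; have [Ha0|Ha0] := eqVneq (H a) 0; first by left; rewrite /c Ha0 mulr0.
  right; rewrite nc // ler0z.
  have : a \in s by apply: contraT => /hs e; move: Ha0; rewrite e eqxx.
  move/hk; lia.
pose rr a := proj1_sig (constructive_indefinite_description _ (lift (hc a))).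
have hrr : forall a, let r := rr a in
   (forall b, R (r b)) /\ vconv nu (fun N => \sum_(b < N) r b * p ^+ b) (c a) /\
   (forall b : nat, r b != 0 -> c a != 0 /\ (nu (c a) <= Posz b)%R) /\
   (c a != 0 -> res (r `|nu (c a)|%N) = res (c a * p ^ (- nu (c a)))).
  by move=> a; rewrite /rr; case: constructive_indefinite_description.
pose g (m : mono n * nat) := rr m.1 m.2.
have ncs : nu (c astar) = Posz k by rewrite nc // nHs addr0.
pose ms := (astar, k).
have gms : res (g ms) = res (H astar).
  have [_ [_ [_ h4]]] := hrr astar.
  rewrite /g /= -[k]/(`|Posz k|%N) -ncs h4 ?c0 // ncs /c mulrAC exprnP -expzD.
  by rewrite addrN expr0z mul1r.
have gms0 : g ms != 0.
  by apply: contraTneq (res_unit Hs0 nHs) => e; rewrite -gms e res0 eqxx.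
exists g, (fun m => if m == ms then g ms else 0), ms.
split.
  split.
    split; first by move=> m; rewrite /g; have [h1 _] := hrr m.1; exact: h1.
    exists s => a b ha; rewrite /g /=.
    have [_ [_ [h3 _]]] := hrr a.
    apply/eqP; apply: contraT => /h3 [].
    by rewrite c0 (hs a ha) eqxx.
  exists c; split; last exact: I_scale.
  by move=> a; have [_ [h2 _]] := hrr a.
split; last by split => //; split => //; rewrite eqxx.
right; exists ms; split => //; split => //.
move=> [a b] gab.
have [_ [_ [h3 _]]] := hrr a.
have [ca0 hb] := h3 b gab.
have Ha0 : H a != 0 by rewrite -c0.
have hv : (wdot w a - W) <= (nu (H a))%:~R.
  by case: (hHa a) => [e|//]; move: Ha0; rewrite e eqxx.
have hb' : ((nu (c a))%:~R : Rt) <= (b%:R : Rt) by rewrite -natr_posz ler_int.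
rewrite nc // intrD natr_posz in hb'.
have hwt : wt_u w (a, b) <= wt_u w ms by rewrite /wt_u /=; lra.
case: (ltP (wt_u w (a, b)) (wt_u w ms)) => hlt; first by right; left.
have heq : wt_u w ms = wt_u w (a, b) by apply/eqP; rewrite eq_le hlt hwt.
have hnu : (nu (H a))%:~R = wdot w a - W by move: heq; rewrite /wt_u /= => ?; lra.
case: (hQ a Ha0 hnu) => [ea|hlex].
  left; rewrite /ms ea; congr (_, _).
  have : (b%:R : Rt) = k%:R by move: heq; rewrite /wt_u /= ea => ?; lra.
  by move/eqP; rewrite eqr_nat => /eqP.
by right; right; split => //; left.
Qed.
Lemma intR_inj (a b : int) : (a%:~R : Rt) = b%:~R -> a = b.
Proof. by move/eqP; rewrite eqr_int => /eqP. Qed.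

Lemma wdot_sub (a m : mono n) : mdiv m a -> wdot w a = wdot w (msub a m) + wdot w m.
Proof.
move=> /forallP hd; rewrite /wdot -big_split; apply: eq_bigr => i _.
by rewrite /msub ffunE /= -mulrDr -natrD subnK.
Qed.

Lemma partB1 (L : seq (kk * mono n * (mono n -> kk))) (W : Rt) :
  (forall x, List.In x L -> exists f, I f /\ init_nu nu p res w f x.2) ->
  exists H, I H /\ (forall a, vge (wdot w a - W) (H a)) /\
   (forall a (E : int), E%:~R = wdot w a - W ->
      res (H a * p ^ (- E)) = \sum_(x <- L) tmul (@mdiv n) (@msub n) x.1.1 x.1.2 x.2 a).
Proof.
elim: L => [|x L IH] hL.
  exists (fun _ => 0); split; first exact: I_zero.
  split; first by move=> a; exact: vge0.
  by move=> a E _; rewrite mul0r res0 big_nil.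
have [H [HI [hHa hHb]]] := IH (fun y hy => hL y (or_intror hy)).
have [f [If [Mx [hb [_ hF]]]]] := hL x (or_introl erefl).
case: x hL hF => [[c m] F] hL /= hF.
have hEv : forall a (E : int), E%:~R = wdot w a - W -> vge 0 (H a * p ^ (- E)).
  move=> a E hE; have := vgeM (hHa a) (vge_expz (- E)).
  by apply: vge_le; rewrite intrN; lra.
have hfv : forall b, vge (wdot w b - Mx) (f b).
  move=> b; have [e|f0] := eqVneq (f b) 0; first by left.
  by right; have := hb b f0; lra.
case: (classic (exists z : int, z%:~R = Mx + wdot w m - W)) => [[z hz]|hnz].
  have [ch [hch0 hch]] := res_surj c.
  exists (fun a => H a + tmul (@mdiv n) (@msub n) (p ^ z * ch) m f a).
  split; first by apply: I_add => //; apply: I_tmul.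
  have tv : forall a, vge (wdot w a - W) (tmul (@mdiv n) (@msub n) (p ^ z * ch) m f a).
    move=> a; rewrite /tmul; case: ifP => hd; last exact: vge0.
    have := vgeM (vgeM (vge_expz z) hch0) (hfv (msub a m)).
    by apply: vge_le; rewrite (wdot_sub hd); lra.
  split; first by move=> a; apply: vgeD => //.
  move=> a E hE; rewrite big_cons mulrDl resD; last first.
  - by have := vgeM (tv a) (vge_expz (- E)); apply: vge_le; rewrite intrN; lra.
  - exact: hEv a E hE.
  rewrite (hHb a E hE) addrC; congr (_ + _).
  rewrite /tmul /=; case: ifP => hd; last by rewrite mul0r res0.
  set b := msub a m.
  have hwa := wdot_sub hd; rewrite -/b in hwa.
  have -> : p ^ z * ch * f b * p ^ (- E) = ch * (f b * p ^ (z - E)).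
    by rewrite expzD; ring.
  rewrite hF -/b.
  have [fb0|fb0] := eqVneq (f b) 0; first by rewrite fb0 mul0r mulr0 res0 mulr0.
  rewrite /=.
  case: eqP => [hw|hw].
    have -> : z - E = - nu (f b).
      by apply: intR_inj; rewrite intrB intrN; lra.
    rewrite resM ?hch //.
    by have := vgeM (vge_nu (f b)) (vge_expz (- nu (f b))); rewrite intrN addrN.
  have hlt : wdot w b - (nu (f b))%:~R < Mx.
    by rewrite lt_neqAle hb // andbT; apply/eqP.
  have h1 : vge 1 (f b * p ^ (z - E)).
    right; rewrite nuM ?expz_neq0 // nu_expz.
    have : ((0 : int)%:~R : Rt) < (nu (f b) + (z - E))%:~R by rewrite intrD intrB; lra.
    rewrite ltr_int => h0.
    have : (1 <= nu (f b) + (z - E))%R by lia.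
    by rewrite -(ler_int Rt).
  have h0 : vge 0 (f b * p ^ (z - E)) by apply: vge_le h1.
  by rewrite resM // (proj2 (res_eq0 h0) h1) !mulr0.
exists H; split => //; split => //.
move=> a E hE; rewrite big_cons hHb // /tmul /=; case: ifP => hd; last by rewrite add0r.
set b := msub a m; rewrite hF -/b.
have hwa := wdot_sub hd; rewrite -/b in hwa.
case: (f b =P 0) => [//|/eqP fb0] /=; first by rewrite mulr0 add0r.
case: eqP => [hw|_]; last by rewrite mulr0 add0r.
exfalso; apply: hnz; exists (E - nu (f b)); rewrite intrB; lra.
Qed.
Lemma vge_sum_In (T : Type) (L : seq T) (F : T -> K) (r : Rt) :
  (forall x, List.In x L -> vge r (F x)) -> vge r (\sum_(x <- L) F x).
Proof.
elim: L => [|x L IH] hv; first by rewrite big_nil; exact: vge0.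
rewrite big_cons; apply: vgeD; first by apply: hv; left.
by apply: IH => y hy; apply: hv; right.
Qed.

Lemma res_sum_nz (T : Type) (L : seq T) (F : T -> K) :
  (forall x, List.In x L -> vge 0 (F x)) -> res (\sum_(x <- L) F x) != 0 ->
  exists x, List.In x L /\ res (F x) != 0.
Proof.
elim: L => [|x L IH] hv; first by rewrite big_nil res0 eqxx.
rewrite big_cons resD; last first.
- by apply: vge_sum_In => y hy; apply: hv; right.
- by apply: hv; left.
have [hx|hx] := eqVneq (res (F x)) 0; last by move=> _; exists x; split => //; left.
rewrite hx add0r => /IH [|y [hy hy']]; first by move=> y hy; apply: hv; right.
by exists y; split => //; right.
Qed.

Lemma Forall2_In_l (A B : Type) (P : A -> B -> Prop) l l' x :
  List.Forall2 P l l' -> List.In x l -> exists y, List.In y l' /\ P x y.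
Proof.
elim=> [//|a b l1 l2 hab _ IH] [<-|hx]; first by exists b; split => //; left.
by have [y [hy hy']] := IH hx; exists y; split => //; right.
Qed.
Lemma Forall2_In_r (A B : Type) (P : A -> B -> Prop) l l' y :
  List.Forall2 P l l' -> List.In y l' -> exists x, List.In x l /\ P x y.
Proof.
elim=> [//|a b l1 l2 hab _ IH] [<-|hy]; first by exists a; split => //; left.
by have [x [hx hx']] := IH hy; exists x; split => //; right.
Qed.

Definition madd (a b : mono n) : mono n := [ffun i => (a i + b i)%N].
Lemma mdiv_madd (a b : mono n) : mdiv a (madd a b).
Proof. by apply/forallP => i; rewrite ffunE leq_addr. Qed.
Lemma msub_madd (a b : mono n) : msub (madd a b) a = b.
Proof. by apply/ffunP => i; rewrite !ffunE addKn. Qed.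
Lemma madd_msub (a m : mono n) : mdiv a m -> madd a (msub m a) = m.
Proof. by move=> /forallP h; apply/ffunP => i; rewrite !ffunE subnKC. Qed.
Lemma mdiv_msub (a b : mono n) : mdiv (msub a b) a.
Proof. by apply/forallP => i; rewrite ffunE leq_subr. Qed.

Lemma tmul_single (c : kk) (m0 a : mono n) (v : kk) (l : mono n -> kk) (mu : mono n) :
  (forall nn, l nn = if nn == a then v else 0) ->
  tmul (@mdiv n) (@msub n) c m0 l mu = if mu == madd m0 a then c * v else 0.
Proof.
move=> hl; rewrite /tmul hl.
case: (mu =P madd m0 a) => [->|ne]; first by rewrite mdiv_madd msub_madd eqxx.
case: ifP => hd //; case: eqP => [e|_]; last by rewrite mulr0.
by exfalso; apply: ne; rewrite -e madd_msub.
Qed.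

Definition tm0 : mono n * nat := (mono0, 0%N).
Lemma tmdiv0 (m : mono n * nat) : tmdiv tm0 m.
Proof. by rewrite /tmdiv mdiv0. Qed.
Lemma tmsub0 (m : mono n * nat) : tmsub m tm0 = m.
Proof. by case: m => a b; rewrite /tmsub /= msub0 subn0. Qed.

Lemma keyB (G : seq (mono n * nat -> K)) (G' : seq (mono n -> kk))
  (hG : std_basis (@tmdiv n) (@tmsub n) R (gt_u w) (pi_pre nu p R I) G)
  (hF2 : List.Forall2 (fun g F => exists h, init_u w g h /\ t_one res h F) G G')
  (f : mono n -> kk) (astar : mono n) :
  init_nu_ideal nu p res w I f -> f astar != 0 ->
  (forall mu, f mu != 0 -> mu = astar \/ lex_gt astar mu) ->
  exists g' ai e, List.In g' G' /\ e != 0 /\ mdiv ai astar /\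
    is_lead (@lex_gt n) g' (fun mu => if mu == ai then e else 0).
Proof.
move=> [L0 [hL0 hf]] fs0 hflead.
have [H [HI [hHa hHb]]] := partB1 (wdot w astar) (fun x hx => proj2 (hL0 x hx)).
have hQ : forall a, H a != 0 -> (nu (H a))%:~R = wdot w a - wdot w astar ->
                    a = astar \/ lex_gt astar a.
  move=> a Ha0 hnu; apply: hflead.
  have := hHb a (nu (H a)) hnu; rewrite -hf => <-.
  apply: res_unit; first by rewrite mulf_neq0 // expz_neq0.
  by rewrite nuM ?expz_neq0 // nu_expz addrN.
have hs0 : ((0 : int)%:~R : Rt) = wdot w astar - wdot w astar by rewrite subrr.
have hs := hHb astar 0 hs0.
rewrite oppr0 expr0z mulr1 -hf in hs.
have hsv : vge 0 (H astar) by have := hHa astar; rewrite subrr.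
have [Hs0 nHs] : H astar != 0 /\ nu (H astar) = 0 by apply: res_neq0 => //; rewrite hs.
have [g [l [ms [gpi [glead [ms1 [gms lms]]]]]]] := partB2 HI hHa hQ erefl Hs0 nHs.
have hl : ideal_gen (@tmdiv n) (@tmsub n) R
          (fun l => exists f, pi_pre nu p R I f /\ is_lead (gt_u w) f l) l.
  exists [:: (1, tm0, l)]; split.
    by move=> x [<-|//]; split; [exact: R1|exists g].
  by move=> m; rewrite big_cons big_nil addr0 /tmul /= tmdiv0 tmsub0 mul1r.
have [L1 [hL1 hl1]] := proj2 (proj2 hG l) hl.
have hv : forall x, List.In x L1 -> vge 0 (tmul (@tmdiv n) (@tmsub n) x.1.1 x.1.2 x.2 ms).
  move=> x hx; have [Rx [gi [hgi gil]]] := hL1 x hx.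
  rewrite /tmul; case: ifP => _; last exact: vge0.
  have -> : (0 : Rt) = 0 + 0 by rewrite addr0.
  apply: vgeM; first exact: R_OK.
  case: gil => [[_ ->]|[m0 [_ [_ ->]]]]; first exact: vge0.
  case: eqP => _; last exact: vge0.
  by apply: R_OK; have [[hR' _] _] := proj1 hG gi hgi; apply: hR'.
have [x [hx hxr]] : exists x, List.In x L1 /\
    res (tmul (@tmdiv n) (@tmsub n) x.1.1 x.1.2 x.2 ms) != 0.
  apply: res_sum_nz => //; rewrite -hl1 lms gms hs //.
have [Rx [gi [hgi gil]]] := hL1 x hx.
move: hxr; rewrite /tmul; case: ifP => hd; last by rewrite res0 eqxx.
set mu := tmsub ms x.1.2.
have hv2 : vge 0 (x.2 mu).
  case: gil => [[_ ->]|[m0 [_ [_ ->]]]]; first exact: vge0.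
  case: eqP => _; last exact: vge0.
  by apply: R_OK; have [[hR' _] _] := proj1 hG gi hgi; apply: hR'.
rewrite resM //; last exact: R_OK.
move=> hr; have hr2 : res (x.2 mu) != 0 by apply: contraNneq hr => ->; rewrite mulr0.
case: gil => [[_ h0]|[m0 [gm0 [hlead hx2]]]]; first by move: hr2; rewrite h0 res0 eqxx.
move: hr2; rewrite hx2; case: (mu =P m0) => [emu|_]; last by rewrite res0 eqxx.
move=> hr0.
have [Ti [hTi [h [hh ht]]]] := Forall2_In_l hF2 hgi.
have [T1 T2] := partB4 gm0 hlead hh ht.
exists Ti, m0.1, (res (gi m0)); split => //; split => //; split.
  by rewrite -emu /mu /tmsub /= -ms1; apply: mdiv_msub.
right; exists m0.1; split; first by rewrite T1.
split; first exact: T2.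
by move=> m'; rewrite T1.
Qed.
Lemma mainB (G : seq (mono n * nat -> K)) (G' : seq (mono n -> kk))
  (hG : std_basis (@tmdiv n) (@tmsub n) R (gt_u w) (pi_pre nu p R I) G)
  (hF2 : List.Forall2 (fun g F => exists h, init_u w g h /\ t_one res h F) G G') :
  std_basis (@mdiv n) (@msub n) (fun _ => True) (@lex_gt n) (init_nu_ideal nu p res w I) G'.
Proof.
have inJ : forall g', List.In g' G' -> init_nu_ideal nu p res w I g'.
  move=> g' hg'; have [g [hg [h [hh ht]]]] := Forall2_In_r hF2 hg'.
  have [[gR _] [F [hpi IF]]] := proj1 hG g hg.
  case: (partA gR hpi hh ht) => [T0|hin].
    by exists [::]; split => // m; rewrite big_nil T0.
  exists [:: (1, mono0, g')]; split.
    by move=> x [<-|//]; split => //; exists F.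
  by move=> m; rewrite big_cons big_nil addr0 /tmul /= mdiv0 msub0 mul1r.
split => // hh; split.
  move=> [L [hL hs]]; exists L; split => // x hx.
  have [_ [g' [hg' hl]]] := hL x hx; split => //; exists g'; split => //; exact: inJ.
move=> [L [hL hs]].
suff [L' [hL' hs']] : exists L' : seq (kk * mono n * (mono n -> kk)),
    (forall x, List.In x L' -> True /\ exists g', List.In g' G' /\ is_lead (@lex_gt n) g' x.2) /\
    forall m, \sum_(x <- L) tmul (@mdiv n) (@msub n) x.1.1 x.1.2 x.2 m =
              \sum_(x <- L') tmul (@mdiv n) (@msub n) x.1.1 x.1.2 x.2 m.
  by exists L'; split => // m; rewrite hs hs'.
elim: L hL {hs} => [|x L IH] hL; first by exists [::].
have [L' [hL' hs']] := IH (fun y hy => hL y (or_intror hy)).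
have [_ [f [fJ fl]]] := hL x (or_introl erefl).
case: fl => [[_ l0]|[astar [fs0 [flead hl]]]].
  exists L'; split => // m; rewrite big_cons hs' /tmul l0 mulr0.
  by case: ifP => _; rewrite add0r.
have [g' [ai [e [hg' [e0 [hdiv glead]]]]]] := keyB hG hF2 fJ fs0 flead.
exists ((x.1.1 * f astar / e, madd x.1.2 (msub astar ai), fun mu => if mu == ai then e else 0) :: L').
split.
  by move=> y [<-|hy]; [split => //; exists g'; split | exact: hL' y hy].
move=> m; rewrite !big_cons hs'; congr (_ + _).
have hl2 : forall nn, (fun mu => if mu == ai then e else 0) nn = if nn == ai then e else 0 by [].
rewrite (tmul_single _ _ _ hl) /= (tmul_single _ _ _ hl2).
have -> : madd (madd x.1.2 (msub astar ai)) ai = madd x.1.2 astar.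
  apply/ffunP => i; rewrite !ffunE; move/forallP: hdiv => /(_ i); lia.
by rewrite divfK.
Qed.

End Val.

Theorem corollary3p9
  (K : fieldType) (nu : K -> int) (p : K)
  (kk : fieldType) (res : K -> kk)
  (R : K -> Prop)
  (Rt : realType) (n : nat) (w : 'I_n -> Rt)
  (I : (mono n -> K) -> Prop)
  (G : seq (mono n * nat -> K))
  (hK : complete_dvf nu p)
  (hres : residue_map nu res)
  (hR : good_subring nu p R)
  (hI : homog_ideal I)
  (hG : std_basis (@tmdiv n) (@tmsub n) R (gt_u w) (pi_pre nu p R I) G)
  (hGred : init_reduced R G) :
  forall G' : seq (mono n -> kk),
    List.Forall2 (fun g F => exists h, init_u w g h /\ t_one res h F) G G' ->
    std_basis (@mdiv n) (@msub n) (fun _ => True) (@lex_gt n)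
              (init_nu_ideal nu p res w I) G'.
Proof.
move=> G' hF2.
exact: (mainB hK hres hR (proj1 hI) hG hF2).
Qed.
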